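(* Let $S$ be an inductive left $E$-monoid with left $E$-modal operation $\cdot$, and let $P(E,S)$ be the set $E\times S$ with multiplication $(e,s)*(f,t)=(e\wedge(s\cdot f),\,st)$ and unary operation $D((e,s))=(e,1)$. Then the map $\psi:P(E,S)\to Rest(E,S)$, $\psi((e,s))=(e,es)$, is a surjective semigroup homomorphism satisfying $\psi(D(x))=D(\psi(x))$ for all $x\in P(E,S)$, and $\psi$ is injective on $D(P(E,S))=\{(e,1)\mid e\in E\}$.
   Context: For a semigroup $S$, $E(S)$ is its set of idempotents; for $e,f\in E(S)$, $e\le_r f$ iff $e=ef$. $E\subseteq E(S)$ is right pre-reduced if $e=ef$ and $f=fe$ imply $e=f$ for $e,f\in E$. Let $S$ be a monoid and $1\in E\subseteq E(S)$. $S$ is an inductive left $E$-monoid if $E$ is right pre-reduced, $(E,\le_r)$ is a meet-semilattice with meet $\wedge$, and (I1') for all $t\in S$, $e\in E$ there is $t\cdot e\in E$ such that for all $s\in S$: $ste=st$ iff $s(t\cdot e)=s$ (the map $(t,e)\mapsto t\cdot e$, necessarily unique, is the left $E$-modal operation); (I2') for $s\in S$, $e,f\in E$: $se=sf=s$ implies $s(e\wedge f)=s$. $Rest(E,S)$ is the set $C_E(S)=\{(e,s)\in E\times S\mid es=s\}$ with multiplication $(e,s)(f,t)=(e\wedge(s\cdot f),(e\wedge(s\cdot f))st)$ and $D((e,s))=(e,e)$. *)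

(* Defs.v *)
Set Implicit Arguments.

Section Defs.
Variable S : Type.
Variable mul : S -> S -> S.
Variable one : S.

Definition is_monoid : Prop :=
  (forall x y z, mul (mul x y) z = mul x (mul y z)) /\
  (forall x, mul one x = x) /\ (forall x, mul x one = x).

Definition idempotent (e : S) : Prop := mul e e = e.

Definition le_r (e f : S) : Prop := e = mul e f.

Variable E : S -> Prop.

Definition right_pre_reduced : Prop :=
  forall e f, E e -> E f -> e = mul e f -> f = mul f e -> e = f.

Definition is_meet_semilattice (meet : S -> S -> S) : Prop :=
  forall e f, E e -> E f ->
    E (meet e f) /\ le_r (meet e f) e /\ le_r (meet e f) f /\
    (forall g, E g -> le_r g e -> le_r g f -> le_r g (meet e f)).

Definition is_left_E_modal (dot : S -> S -> S) : Prop :=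
  forall t e, E e ->
    E (dot t e) /\
    (forall s, mul (mul s t) e = mul s t <-> mul s (dot t e) = s).

Definition I2' (meet : S -> S -> S) : Prop :=
  forall s e f, E e -> E f -> mul s e = s -> mul s f = s -> mul s (meet e f) = s.

Definition inductive_left_E_monoid (meet dot : S -> S -> S) : Prop :=
  is_monoid /\ E one /\ (forall e, E e -> idempotent e) /\
  right_pre_reduced /\ is_meet_semilattice meet /\
  is_left_E_modal dot /\ I2' meet.

Variables meet dot : S -> S -> S.

(* P(E,S): carrier E x S (pairs (e,s) with E e) *)
Definition P_mul (x y : S * S) : S * S :=
  let (e, s) := x in let (f, t) := y in (meet e (dot s f), mul s t).
Definition P_D (x : S * S) : S * S := (fst x, one).

(* Rest(E,S): carrier C_E(S) = {(e,s) | E e, e s = s} *)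
Definition in_CE (x : S * S) : Prop := E (fst x) /\ mul (fst x) (snd x) = snd x.
Definition Rest_mul (x y : S * S) : S * S :=
  let (e, s) := x in let (f, t) := y in
  let g := meet e (dot s f) in (g, mul g (mul s t)).
Definition Rest_D (x : S * S) : S * S := (fst x, fst x).

Definition psi (x : S * S) : S * S := (fst x, mul (fst x) (snd x)).

End Defs.

(* Main.v *)
Require Import Defs.

Theorem proposition6p1 (S : Type) (mul : S -> S -> S) (one : S) (E : S -> Prop)
  (meet dot : S -> S -> S) :
  inductive_left_E_monoid mul one E meet dot ->
  (* psi maps P(E,S) into Rest(E,S) *)
  (forall x : S * S, E (fst x) -> in_CE mul E (psi mul x)) /\
  (* surjective *)
  (forall y : S * S, in_CE mul E y -> exists x : S * S, E (fst x) /\ psi mul x = y) /\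
  (* semigroup homomorphism *)
  (forall x y : S * S, E (fst x) -> E (fst y) ->
     psi mul (P_mul mul meet dot x y) = Rest_mul mul meet dot (psi mul x) (psi mul y)) /\
  (* compatible with D *)
  (forall x : S * S, E (fst x) -> psi mul (P_D one x) = Rest_D (psi mul x)) /\
  (* injective on D(P(E,S)) = {(e,1) | e in E} *)
  (forall e f : S, E e -> E f -> psi mul (e, one) = psi mul (f, one) -> e = f).
Proof.
  intros [[assoc [l1 r1]] [E1 [Eid [rpr [msl [modal i2]]]]]].
  unfold idempotent, le_r in *.
  split; [|split; [|split; [|split]]].
  - intros [e s] He; unfold in_CE, psi; simpl. split; [exact He|].
    rewrite <- assoc, Eid; auto.
  - intros [e s] [He Hs]; simpl in *. exists (e, s); unfold psi; simpl.
    rewrite Hs; auto.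
  - intros [e s] [f t] He Hf; simpl in *; unfold psi, P_mul, Rest_mul; simpl.
    destruct (modal s f Hf) as [Hd1 Hd].
    destruct (modal (mul e s) f Hf) as [Hd1' Hd'].
    destruct (msl e (dot s f) He Hd1) as [Hg [Hge [Hgd Hgmax]]].
    destruct (msl e (dot (mul e s) f) He Hd1') as [Hh [Hhe [Hhd Hhmax]]].
    set (g := meet e (dot s f)) in *.
    set (h := meet e (dot (mul e s) f)) in *.
    assert (Gs : mul (mul g s) f = mul g s) by (apply Hd; congruence).
    assert (Hs : mul (mul h (mul e s)) f = mul h (mul e s)) by (apply Hd'; congruence).
    assert (hes : mul h (mul e s) = mul h s) by (rewrite <- assoc, <- Hhe; reflexivity).
    assert (ges : mul g (mul e s) = mul g s) by (rewrite <- assoc, <- Hge; reflexivity).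
    assert (gh : g = h).
    { apply rpr; auto.
      - apply Hhmax; auto. symmetry; apply Hd'. rewrite ges; auto.
      - apply Hgmax; auto. symmetry; apply Hd. rewrite <- hes; auto. }
    rewrite <- gh. f_equal.
    rewrite (assoc e s (mul f t)), <- (assoc g e), <- Hge.
    rewrite <- (assoc s f t), <- (assoc g (mul s f) t), <- (assoc g s f), Gs, assoc.
    reflexivity.
  - intros [e s] He; unfold psi, P_D, Rest_D; simpl. rewrite r1; auto.
  - intros e f He Hf H; unfold psi in H; simpl in H. congruence.
Qed.
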